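(* Let $M=\{a^i: i\geq 0\}\cup\{b_j: j\in\mathbb{Z}\}\cup\{0\}$ be the monoid with zero $0$ and identity $a^0=1$, where $a^ia^k=a^{i+k}$, and for $i\geq1$, $j,k\in\mathbb{Z}$: $a^ib_j=b_{i+j}$, $b_ja^i=0$, $b_jb_k=0$. Then $M$ is residually finite, $b_0$ and $b_1$ are not $\mathcal{L}$-related in $M$, but for every finite monoid $T$ and every homomorphism $\theta:M\to T$ the elements $\theta(b_0)$ and $\theta(b_1)$ are $\mathcal{L}$-related in $T$.
   Context: A monoid is residually finite if any two distinct elements are separated by a homomorphism to a finite monoid. Green's relation $\mathcal{L}$ on a monoid $T$: $x\mathcal{L}y$ iff $Tx=Ty$. *)

(* Defs.v *)
From Stdlib Require Import ZArith.
From mathcomp Require Import all_boot.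

Set Implicit Arguments.
Unset Strict Implicit.
Unset Printing Implicit Defensive.

Inductive Melt : Type :=
  | Apow : nat -> Melt
  | Bel : Z -> Melt
  | Mzero : Melt.

Definition Mmul (x y : Melt) : Melt :=
  match x, y with
  | Mzero, _ => Mzero
  | _, Mzero => Mzero
  | Apow i, Apow k => Apow (i + k)%nat
  | Apow i, Bel j => Bel (Z.of_nat i + j)%Z
  | Bel j, Apow 0 => Bel j
  | Bel _, Apow (S _) => Mzero
  | Bel _, Bel _ => Mzero
  end.

Definition Mone : Melt := Apow 0.

Record finMonoid := FinMonoid {
  fm_car :> finType;
  fm_mul : fm_car -> fm_car -> fm_car;
  fm_one : fm_car;
  fm_mulA : forall x y z, fm_mul x (fm_mul y z) = fm_mul (fm_mul x y) z;
  fm_mul1x : forall x, fm_mul fm_one x = x;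
  fm_mulx1 : forall x, fm_mul x fm_one = x
}.

Definition is_hom (T : finMonoid) (f : Melt -> T) : Prop :=
  f Mone = @fm_one T /\ forall x y, f (Mmul x y) = @fm_mul T (f x) (f y).

Definition Lrel (S : Type) (mul : S -> S -> S) (x y : S) : Prop :=
  forall z, (exists s, z = mul s x) <-> (exists t, z = mul t y).

Definition M_residually_finite : Prop :=
  forall x y : Melt, x <> y ->
    exists (T : finMonoid) (f : Melt -> T), is_hom f /\ f x <> f y.

(* Main.v *)
Require Import Defs.
From Stdlib Require Import ZArith Lia.
From mathcomp Require Import all_boot.

Definition transMonoid (X : finType) : finMonoid.
refine (@FinMonoid {ffun X -> X} (fun F G => [ffun v => F (G v)]) [ffun v => v] _ _ _).
- by move=> F G H; apply/ffunP => v; rewrite !ffunE.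
- by move=> F; apply/ffunP => v; rewrite !ffunE.
- by move=> F; apply/ffunP => v; rewrite !ffunE.
Defined.

Definition Xt (n : nat) := option (bool * 'I_n.+1).

Definition Zr (n : nat) (z : Z) : 'I_n.+1 := inord (Z.to_nat (z mod Z.of_nat n.+1)).

Lemma Zr_val n z : Z.of_nat (Zr n z) = (z mod Z.of_nat n.+1)%Z.
Proof.
have [h1 h2] : (0 <= z mod Z.of_nat n.+1 < Z.of_nat n.+1)%Z by apply: Z.mod_pos_bound; lia.
rewrite /Zr inordK; first lia.
by apply/ltP; lia.
Qed.


Definition act n (m : Melt) (v : Xt n) : Xt n :=
 match m, v with
 | Mzero, _ => None
 | _, None => None
 | Apow i, Some (true, k) => Some (true, inord (minn (i + k) n))
 | Apow i, Some (false, r) => Some (false, Zr n (Z.of_nat i + Z.of_nat r))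
 | Bel j, Some (true, k) => if (k == 0 :> nat) then Some (false, Zr n j) else None
 | Bel j, Some (false, _) => None
 end.

Lemma ZrZ n i j : Zr n (Z.of_nat i + Z.of_nat (Zr n j)) = Zr n (Z.of_nat i + j).
Proof.
rewrite {1}/Zr Zr_val Zplus_mod_idemp_r. by [].
Qed.

Lemma Zr_ord n (r : 'I_n.+1) : Zr n (Z.of_nat r) = r.
Proof.
apply: val_inj => /=; apply: Nat2Z.inj; rewrite Zr_val Z.mod_small //.
have := ltn_ord r => /ltP; lia.
Qed.

Lemma minn_add a b c : minn (a + minn b c) c = minn (a + b) c.
Proof.
case: (leqP b c) => h //.
rewrite (minn_idPr (leq_addl _ _)).
by apply/esym/minn_idPr; apply: leq_trans (ltnW h) (leq_addl _ _).
Qed.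

Lemma act_mul n (n0 : 0 < n) x y v : act n (Mmul x y) v = act n x (act n y v).
Proof.
case: x => [i|j|]; case: y => [k|l|] //; case: v => [[[] m]|] //=.
- congr Some; congr pair; apply: val_inj; rewrite /= !inordK ?ltnS ?geq_minr //.
  by rewrite -addnA minn_add.
- by rewrite ZrZ; do 3 f_equal; rewrite -?plusE; lia.
- by case: (_ == _) => //; rewrite ZrZ.
- case: k => [|k] /=.
    by rewrite add0n (minn_idPl _) ?(ltnSE (ltn_ord m)) // inord_val.
  rewrite inordK ?ltnS ?geq_minr //; case: ifP => // /eqP.
  by rewrite /minn; case: ifP => // _ Hn; rewrite Hn in n0.
- case: k => [|k] //=; by rewrite Zr_ord.
- by case: k.
- by case: (_ == _).
Qed.

Definition sz (m : Melt) : nat :=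
  match m with Apow i => i | Bel j => Z.to_nat (Z.abs j) | Mzero => 0 end.

Lemma mod_eq_small (K j k : Z) : (0 < K)%Z -> (Z.abs j + Z.abs k < K)%Z ->
  (j mod K = k mod K)%Z -> j = k.
Proof.
move=> K0 Hb Hm.
have e1 := Z.div_mod j K ltac:(lia).
have e2 := Z.div_mod k K ltac:(lia).
rewrite Hm in e1.
set q1 := (j / K)%Z in e1; set q2 := (k / K)%Z in e2.
have e : (K * (q1 - q2) = j - k)%Z by lia.
have : (q1 - q2 = 0)%Z by nia.
lia.
Qed.

Lemma resfin : M_residually_finite.
Proof.
move=> x y xy.
pose n := (sz x + sz y).+1.
have n0 : 0 < n by [].
exists (transMonoid (Xt n)), (fun m => [ffun v => act n m v]); split.
  split.
    by apply/ffunP => v; rewrite !ffunE; case: v => [[[] m]|] //=; 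
      [ rewrite add0n (minn_idPl _) ?(ltnSE (ltn_ord m)) // inord_val | rewrite Zr_ord].
  by move=> a b; apply/ffunP => v; rewrite /= !ffunE act_mul.
move=> H; have := congr1 (fun F : {ffun Xt n -> Xt n} => F (Some (true, ord0))) H; clear H; rewrite /= !ffunE.
have hx : sz x < n by rewrite /n ltnS leq_addr.
have hy : sz y < n by rewrite /n ltnS leq_addl.
have hZ : (Z.of_nat (sz x) + Z.of_nat (sz y) < Z.of_nat n.+1)%Z.
  by rewrite /n -plusE; lia.
clearbody n.
case: x xy hx hZ {n0} => [i|j|]; case: y hy => [k|l|] //= hy xy hx hZ.
- case=> /(congr1 val); rewrite /= !inordK ?ltnS ?geq_minr // !addn0.
  rewrite (minn_idPl (ltnW hx)) (minn_idPl (ltnW hy)) => ik.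
  by apply: xy; rewrite ik.
- case=> /(congr1 (fun r : 'I_n.+1 => Z.of_nat r)); rewrite !Zr_val => e.
  apply: xy; congr Bel; apply: (mod_eq_small (Z.of_nat n.+1) _ _ _ _ e); try lia.
Qed.
Lemma part2 : ~ Lrel Mmul (Bel 0%Z) (Bel 1%Z).
Proof.
move=> H; have [t Ht] : exists t, Bel 0 = Mmul t (Bel 1).
  by apply/(H (Bel 0)); exists Mone.
case: t Ht => [i|j|] //= [] ; lia.
Qed.

Lemma part3 (T : finMonoid) (f : Melt -> T) : is_hom f ->
     Lrel (@fm_mul T) (f (Bel 0%Z)) (f (Bel 1%Z)).
Proof.
move=> [f1 fM].
have: ~~ injectiveb (fun i : 'I_(#|T|.+1) => f (Apow i)).
  apply/negP => /injectiveP /leq_card; by rewrite card_ord ltnn.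
case/injectivePn => x [y xy eqxy].
have [n [d Hnd]] : exists n d, f (Apow n) = f (Apow (n + d.+1)).
  case: (ltngtP x y) => h; last by move: xy; rewrite (val_inj h) eqxx.
  - exists x, (y - x.+1); by rewrite addnS -addSn subnKC.
  - exists y, (x - y.+1); by rewrite addnS -addSn subnKC.
have E0 : f (Bel 0) = fm_mul (f (Apow d)) (f (Bel 1)).
  rewrite -fM /= -[Bel 0](_ : Mmul (Apow n) (Bel (- Z.of_nat n)) = _); last first.
    by rewrite /=; congr Bel; lia.
  rewrite fM Hnd -fM /=; congr f; congr Bel.
  rewrite -plusE; lia.
have E1 : f (Bel 1) = fm_mul (f (Apow 1)) (f (Bel 0)).
  by rewrite -fM.
move=> z; split => [[s ->]|[t ->]].
  by exists (fm_mul s (f (Apow d))); rewrite E0 fm_mulA.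
by exists (fm_mul t (f (Apow 1))); rewrite E1 fm_mulA.
Qed.

Theorem mainTheorem3 :
  M_residually_finite /\
  ~ Lrel Mmul (Bel 0%Z) (Bel 1%Z) /\
  (forall (T : finMonoid) (f : Melt -> T), is_hom f ->
     Lrel (@fm_mul T) (f (Bel 0%Z)) (f (Bel 1%Z))).
Proof.
split; first exact: resfin.
split; first exact: part2.
exact: part3.
Qed.
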